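(* For a path connected space $X$ with basepoint $x_0$, the following are equivalent: (1) $\pi_1^{\tau}(X,x_0)$ is discrete; (2) $\pi_1^{qtop}(X,x_0)$ is discrete; (3) every null-homotopic loop $\alpha\in\Omega(X,x_0)$ has an open neighborhood in $\Omega(X,x_0)$ containing only null-homotopic loops.
   Context: $\Omega(X,x_0)$ is the space of loops at $x_0$ with the compact-open topology; $\pi_1^{qtop}(X,x_0)$ is $\pi_1(X,x_0)$ with the quotient topology via $\alpha\mapsto[\alpha]$. $F_M(S)$ is the free (Markov) topological group on a space $S$. For a group with topology $G$, $\tau(G)$ is $G$ with the quotient topology with respect to the multiplication epimorphism $m_G:F_M(G)\to G$ (generator $g\mapsto g$). $\pi_1^{\tau}=\tau\circ\pi_1^{qtop}$. *)

(* Defs.v *)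
From Stdlib Require Import Reals Lra List ClassicalEpsilon Relations.
Open Scope R_scope.
Set Implicit Arguments.

Definition topology (T : Type) := (T -> Prop) -> Prop.

Definition is_topology (T : Type) (op : topology T) : Prop :=
  op (fun _ => True) /\
  (forall U V, op U -> op V -> op (fun x => U x /\ V x)) /\
  (forall F : (T -> Prop) -> Prop, (forall U, F U -> op U) ->
     op (fun x => exists U, F U /\ U x)).

Definition continuous (A B : Type) (opA : topology A) (opB : topology B)
  (f : A -> B) : Prop :=
  forall V, opB V -> opA (fun a => V (f a)).

Definition prod_top (A B : Type) (opA : topology A) (opB : topology B)
  : topology (A * B) :=
  fun W => forall p, W p -> exists U V, opA U /\ opB V /\ U (fst p) /\ V (snd p) /\
     (forall a b, U a -> V b -> W (a, b)).

Definition quotient_top (A B : Type) (opA : topology A) (q : A -> B)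
  : topology B := fun V => opA (fun a => V (q a)).

Definition generated_top (T : Type) (S : (T -> Prop) -> Prop) : topology T :=
  fun W => forall x, W x -> exists l : list (T -> Prop),
     (forall U, In U l -> S U) /\ (forall U, In U l -> U x) /\
     (forall y, (forall U, In U l -> U y) -> W y).

Definition discrete (T : Type) (op : topology T) : Prop := forall U, op U.

Definition compact (T : Type) (op : topology T) (K : T -> Prop) : Prop :=
  forall C : (T -> Prop) -> Prop, (forall U, C U -> op U) ->
    (forall x, K x -> exists U, C U /\ U x) ->
    exists l : list (T -> Prop), (forall U, In U l -> C U) /\
      (forall x, K x -> exists U, In U l /\ U x).

Definition quot (A : Type) (R : A -> A -> Prop) : Type :=
  {P : A -> Prop | exists a, P = R a}.
Definition cls (A : Type) (R : A -> A -> Prop) (a : A) : quot R :=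
  exist _ (R a) (ex_intro _ a eq_refl).
Definition repr (A : Type) (R : A -> A -> Prop) (c : quot R) : A :=
  proj1_sig (constructive_indefinite_description _ (proj2_sig c)).

Definition I : Type := {t : R | 0 <= t <= 1}.
Definition ival (t : I) : R := proj1_sig t.
Lemma i0_pf : 0 <= 0 <= 1. Proof. lra. Qed.
Lemma i1_pf : 0 <= 1 <= 1. Proof. lra. Qed.
Definition i0 : I := exist _ 0 i0_pf.
Definition i1 : I := exist _ 1 i1_pf.
Lemma clamp_pf (r : R) : 0 <= Rmax 0 (Rmin 1 r) <= 1.
Proof. unfold Rmax, Rmin; repeat destruct Rle_dec; lra. Qed.
Definition clampI (r : R) : I := exist _ (Rmax 0 (Rmin 1 r)) (clamp_pf r).

Definition I_top : topology I :=
  fun V => forall t, V t -> exists d, 0 < d /\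
    forall s : I, Rabs (ival s - ival t) < d -> V s.

Section Loops.
Variables (X : Type) (op : topology X) (x0 : X).

Definition path_connected : Prop :=
  forall x y : X, exists p : I -> X, continuous I_top op p /\ p i0 = x /\ p i1 = y.

Definition is_loop (f : I -> X) : Prop :=
  continuous I_top op f /\ f i0 = x0 /\ f i1 = x0.

Definition Omega : Type := {f : I -> X | is_loop f}.

Definition CO_subbasis (W : Omega -> Prop) : Prop :=
  exists (K : I -> Prop) (U : X -> Prop), compact I_top K /\ op U /\
    forall a : Omega, W a <-> (forall t, K t -> U (proj1_sig a t)).
Definition Omega_top : topology Omega := generated_top CO_subbasis.

Lemma const_is_loop : is_loop (fun _ => x0).
Proof.
  split; [|split; reflexivity].
  intros V _ t Ht; exists 1; split; [lra|]; intros; exact Ht.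
Qed.
Definition const_loop : Omega := exist _ (fun _ => x0) const_is_loop.

Definition homotopic (a b : Omega) : Prop :=
  exists H : I * I -> X, continuous (prod_top I_top I_top) op H /\
    (forall s, H (s, i0) = proj1_sig a s) /\
    (forall s, H (s, i1) = proj1_sig b s) /\
    (forall t, H (i0, t) = x0 /\ H (i1, t) = x0).

Definition null_homotopic (a : Omega) : Prop := homotopic a const_loop.

Definition pi1 : Type := quot homotopic.
Definition pi1_cls (a : Omega) : pi1 := cls homotopic a.
Definition pi1_qtop : topology pi1 := quotient_top Omega_top pi1_cls.

Definition concat (f g : I -> X) : I -> X := fun s =>
  if Rle_dec (ival s) (1/2) then f (clampI (2 * ival s))
  else g (clampI (2 * ival s - 1)).
Definition rev_path (f : I -> X) : I -> X := fun s => f (clampI (1 - ival s)).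
(* turn a function into a loop (it is always applied to genuine loops) *)
Definition loop_of (f : I -> X) : Omega :=
  match excluded_middle_informative (is_loop f) with
  | left h => exist _ f h
  | right _ => const_loop
  end.

Definition pi1_mul (c d : pi1) : pi1 :=
  pi1_cls (loop_of (concat (proj1_sig (repr c)) (proj1_sig (repr d)))).
Definition pi1_inv (c : pi1) : pi1 :=
  pi1_cls (loop_of (rev_path (proj1_sig (repr c)))).
Definition pi1_one : pi1 := pi1_cls const_loop.

End Loops.

Section FreeGroup.
Variable S : Type.
(* letters: (true, x) = x, (false, x) = x^{-1} *)
Definition word := list (bool * S).
Inductive red1 : word -> word -> Prop :=
| red1_cancel : forall w1 w2 b x,
    red1 (w1 ++ (b, x) :: (negb b, x) :: w2) (w1 ++ w2).
Definition wequiv : word -> word -> Prop := clos_refl_sym_trans word red1.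

Definition FG : Type := quot wequiv.
Definition FG_mul (a b : FG) : FG := cls wequiv (repr a ++ repr b).
Definition winv (w : word) : word := rev (map (fun p => (negb (fst p), snd p)) w).
Definition FG_inv (a : FG) : FG := cls wequiv (winv (repr a)).
Definition FG_gen (x : S) : FG := cls wequiv ((true, x) :: nil).

Definition group_topology (T : topology FG) : Prop :=
  is_topology T /\
  continuous (prod_top T T) T (fun p => FG_mul (fst p) (snd p)) /\
  continuous T T FG_inv.

(* F_M(S): the finest group topology on the free group making the
   generator inclusion continuous (supremum of all such topologies) *)
Definition markov_top (opS : topology S) : topology FG :=
  generated_top (fun U => exists T, group_topology T /\
                    continuous opS T FG_gen /\ T U).
End FreeGroup.

Section Tau.
Variables (G : Type) (opG : topology G) (gmul : G -> G -> G) (ginv : G -> G) (gone : G).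
Fixpoint eval_word (w : word G) : G :=
  match w with
  | nil => gone
  | (true, g) :: w' => gmul g (eval_word w')
  | (false, g) :: w' => gmul (ginv g) (eval_word w')
  end.
Definition mG (a : FG G) : G := eval_word (repr a).
Definition tau_top : topology G := quotient_top (markov_top opG) mG.
End Tau.

Definition pi1_tau_top (X : Type) (op : topology X) (x0 : X) : topology (pi1 op x0) :=
  @tau_top (pi1 op x0) (@pi1_qtop X op x0) (@pi1_mul X op x0) (@pi1_inv X op x0) (@pi1_one X op x0).

Arguments pi1_qtop {X} op x0 _.
Arguments Omega_top {X} op x0 _.
Arguments pi1_tau_top {X} op x0 _.

(* Main.v *)
From Stdlib Require Import Reals Lra List ClassicalEpsilon Relations ProofIrrelevance FunctionalExtensionality PropExtensionality.
Require Import Defs.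
Open Scope R_scope.


Lemma sig_eq_pi (A : Type) (P : A -> Prop) (x y : sig P) :
  proj1_sig x = proj1_sig y -> x = y.
Proof. destruct x, y; simpl; intros ->; f_equal; apply proof_irrelevance. Qed.

Lemma I_eq (a b : I) : ival a = ival b -> a = b.
Proof. apply sig_eq_pi. Qed.

Lemma ival_bnd (s : I) : 0 <= ival s <= 1.
Proof. exact (proj2_sig s). Qed.

Ltac rcase := unfold Rmax, Rmin in *; repeat (destruct Rle_dec); try lra.

Lemma clamp_lip (x y : R) : Rabs (ival (clampI x) - ival (clampI y)) <= Rabs (x - y).
Proof. simpl. unfold Rabs; repeat destruct Rcase_abs; rcase. Qed.

Lemma clampI_ival (s : I) : clampI (ival s) = s.
Proof. apply I_eq. pose proof (ival_bnd s). simpl. rcase. Qed.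

Lemma clamp_i0 : forall x, x <= 0 -> clampI x = i0.
Proof. intros; apply I_eq; simpl; rcase. Qed.
Lemma clamp_i1 : forall x, 1 <= x -> clampI x = i1.
Proof. intros; apply I_eq; simpl; rcase. Qed.
Lemma clamp_val x : 0 <= x <= 1 -> ival (clampI x) = x.
Proof. intros; simpl; rcase. Qed.

Definition nb1 (t : I) (N : I -> Prop) :=
  exists d, 0 < d /\ forall s : I, Rabs (ival s - ival t) < d -> N s.

Lemma nb1_inter t N1 N2 : nb1 t N1 -> nb1 t N2 -> nb1 t (fun s => N1 s /\ N2 s).
Proof.
  intros [d1 [H1 K1]] [d2 [H2 K2]]. exists (Rmin d1 d2). split.
  - rcase.
  - intros s Hs. split; [apply K1|apply K2]; rcase.
Qed.

Lemma nb1_mono t (N1 N2 : I -> Prop) : nb1 t N1 -> (forall s, N1 s -> N2 s) -> nb1 t N2.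
Proof. intros [d [H K]] M. exists d; split; auto. Qed.

Lemma Itop_ball t d : 0 < d -> I_top (fun s => Rabs (ival s - ival t) < d).
Proof.
  intros Hd u Hu. exists (d - Rabs (ival u - ival t)). split; [lra|].
  intros s Hs. pose proof (Rabs_triang (ival s - ival u) (ival u - ival t)).
  replace (ival s - ival u + (ival u - ival t)) with (ival s - ival t) in H by ring. lra.
Qed.

Lemma Itop_true : I_top (fun _ => True).
Proof. intros t _; exists 1; split; auto; lra. Qed.

Lemma Itop_inter U V : I_top U -> I_top V -> I_top (fun s => U s /\ V s).
Proof. intros HU HV t [Ut Vt]. apply nb1_inter; [apply HU|apply HV]; auto. Qed.

Definition prodII := prod_top I_top I_top.

Definition nb2 (p : I * I) (N : I * I -> Prop) :=
  exists U V, I_top U /\ I_top V /\ U (fst p) /\ V (snd p) /\ forall a b, U a -> V b -> N (a, b).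

Lemma nb2_inter p N1 N2 : nb2 p N1 -> nb2 p N2 -> nb2 p (fun q => N1 q /\ N2 q).
Proof.
  intros [U1 [V1 [? [? [? [? K1]]]]]] [U2 [V2 [? [? [? [? K2]]]]]].
  exists (fun s => U1 s /\ U2 s), (fun s => V1 s /\ V2 s).
  split; [apply Itop_inter; auto|]. split; [apply Itop_inter; auto|].
  split; [split; auto|]. split; [split; auto|]. intros a0 b0 [] []; auto.
Qed.

Lemma nb2_mono p (N1 N2 : I * I -> Prop) : nb2 p N1 -> (forall q, N1 q -> N2 q) -> nb2 p N2.
Proof. intros [U [V [? [? [? [? K]]]]]] M. exists U, V; repeat split; auto. Qed.

Lemma nb2_ball p d : 0 < d -> nb2 p (fun q => Rabs (ival (fst q) - ival (fst p)) < d /\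
                                      Rabs (ival (snd q) - ival (snd p)) < d).
Proof.
  intros Hd. exists (fun s => Rabs (ival s - ival (fst p)) < d), (fun s => Rabs (ival s - ival (snd p)) < d).
  repeat split; try apply Itop_ball; auto; try (unfold Rminus; rewrite Rplus_opp_r, Rabs_R0; lra).
Qed.

Lemma prodII_intro W : (forall p, W p -> nb2 p W) -> prodII W.
Proof. intros H p Wp. exact (H p Wp). Qed.

Lemma prodII_nb W p : prodII W -> W p -> nb2 p W.
Proof. intros H Wp. exact (H p Wp). Qed.

Definition dist2 (p q : I * I) :=
  Rabs (ival (fst q) - ival (fst p)) + Rabs (ival (snd q) - ival (snd p)).
Definition lip2 (e : I * I -> R) :=
  exists L, 0 < L /\ forall p q, Rabs (e q - e p) <= L * dist2 p q.
Definition lip1 (f : I -> R) := lip2 (fun p => f (fst p)).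

Lemma dist2_nn p q : 0 <= dist2 p q.
Proof. unfold dist2; pose proof (Rabs_pos (ival (fst q) - ival (fst p))); pose proof (Rabs_pos (ival (snd q) - ival (snd p))); lra. Qed.

Lemma lip2_const c : lip2 (fun _ => c).
Proof. exists 1; split; [lra|]; intros; rewrite Rminus_diag, Rabs_R0; pose proof (dist2_nn p q); lra. Qed.
Lemma lip2_fst : lip2 (fun p => ival (fst p)).
Proof. exists 1; split; [lra|]; intros; unfold dist2; pose proof (Rabs_pos (ival (snd q) - ival (snd p))); lra. Qed.
Lemma lip2_snd : lip2 (fun p => ival (snd p)).
Proof. exists 1; split; [lra|]; intros; unfold dist2; pose proof (Rabs_pos (ival (fst q) - ival (fst p))); lra. Qed.
Lemma lip2_plus e1 e2 : lip2 e1 -> lip2 e2 -> lip2 (fun p => e1 p + e2 p).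
Proof.
  intros [L1 [H1 K1]] [L2 [H2 K2]]. exists (L1 + L2); split; [lra|]. intros p q.
  specialize (K1 p q); specialize (K2 p q).
  pose proof (Rabs_triang (e1 q - e1 p) (e2 q - e2 p)).
  replace (e1 q + e2 q - (e1 p + e2 p)) with (e1 q - e1 p + (e2 q - e2 p)) by ring. lra.
Qed.
Lemma lip2_scal c e : lip2 e -> lip2 (fun p => c * e p).
Proof.
  intros [L [H K]]. exists ((Rabs c + 1) * L); split.
  - pose proof (Rabs_pos c); nra.
  - intros p q. replace (c * e q - c * e p) with (c * (e q - e p)) by ring.
    rewrite Rabs_mult. specialize (K p q). pose proof (Rabs_pos c). pose proof (Rabs_pos (e q - e p)).
    pose proof (dist2_nn p q). nra.
Qed.
Lemma lip2_min e1 e2 : lip2 e1 -> lip2 e2 -> lip2 (fun p => Rmin (e1 p) (e2 p)).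
Proof.
  intros [L1 [H1 K1]] [L2 [H2 K2]]. exists (L1 + L2); split; [lra|]. intros p q.
  specialize (K1 p q); specialize (K2 p q). pose proof (dist2_nn p q).
  assert (0 <= L1 * dist2 p q) by nra. assert (0 <= L2 * dist2 p q) by nra.
  revert K1 K2. unfold Rabs; repeat destruct Rcase_abs; rcase.
Qed.
Lemma lip2_max e1 e2 : lip2 e1 -> lip2 e2 -> lip2 (fun p => Rmax (e1 p) (e2 p)).
Proof.
  intros [L1 [H1 K1]] [L2 [H2 K2]]. exists (L1 + L2); split; [lra|]. intros p q.
  specialize (K1 p q); specialize (K2 p q). pose proof (dist2_nn p q).
  assert (0 <= L1 * dist2 p q) by nra. assert (0 <= L2 * dist2 p q) by nra.
  revert K1 K2. unfold Rabs; repeat destruct Rcase_abs; rcase.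
Qed.


Lemma Ccomp (A B C : Type) (oA : topology A) (oB : topology B) (oC : topology C) f g :
  continuous oA oB f -> continuous oB oC g -> continuous oA oC (fun x => g (f x)).
Proof. intros Hf Hg V HV. apply (Hf (fun b => V (g b))), Hg, HV. Qed.

Lemma nb2_lip (e : I * I -> R) p d : lip2 e -> 0 < d ->
  nb2 p (fun q => Rabs (e q - e p) < d).
Proof.
  intros [L [HL K]] Hd. eapply nb2_mono. apply (nb2_ball p (d / (2 * L))).
  apply Rdiv_lt_0_compat; lra.
  intros q [H1 H2]. specialize (K p q). unfold dist2 in K.
  assert (L * (Rabs (ival (fst q) - ival (fst p)) + Rabs (ival (snd q) - ival (snd p))) < d).
  { assert (Rabs (ival (fst q) - ival (fst p)) + Rabs (ival (snd q) - ival (snd p)) < d / L).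
    { replace (d / L) with (d / (2 * L) + d / (2 * L)) by (field; lra). lra. }
    apply (Rmult_lt_compat_l L) in H; [|lra]. replace (L * (d / L)) with d in H by (field; lra). lra. }
  lra.
Qed.

Lemma nb2_lt (r : I * I -> R) p c : lip2 r -> r p < c -> nb2 p (fun q => r q < c).
Proof.
  intros Hr Hp. eapply nb2_mono. apply (nb2_lip r p (c - r p)); auto; lra.
  intros q Hq. unfold Rabs in Hq; destruct Rcase_abs; lra.
Qed.
Lemma nb2_gt (r : I * I -> R) p c : lip2 r -> c < r p -> nb2 p (fun q => c < r q).
Proof.
  intros Hr Hp. eapply nb2_mono. apply (nb2_lip r p (r p - c)); auto; lra.
  intros q Hq. unfold Rabs in Hq; destruct Rcase_abs; lra.
Qed.

Lemma C2 (e : I * I -> R) : lip2 e -> continuous prodII I_top (fun p => clampI (e p)).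
Proof.
  intros He V HV. apply prodII_intro. intros p Vp.
  destruct (HV _ Vp) as [d [Hd K]].
  eapply nb2_mono. apply (nb2_lip e p d He Hd).
  intros q Hq. apply K. eapply Rle_lt_trans. apply clamp_lip. exact Hq.
Qed.

Lemma C1 (f : I -> R) : lip1 f -> continuous I_top I_top (fun s => clampI (f s)).
Proof.
  intros [L [HL K]] V HV t Vt. destruct (HV _ Vt) as [d [Hd K2]].
  exists (d / L). split. apply Rdiv_lt_0_compat; lra.
  intros s Hs. apply K2. eapply Rle_lt_trans. apply clamp_lip.
  specialize (K (t, t) (s, t)). unfold dist2 in K; simpl in K.
  rewrite Rminus_diag, Rabs_R0, Rplus_0_r in K.
  apply (Rmult_lt_compat_l L) in Hs; [|lra]. replace (L * (d / L)) with d in Hs by (field; lra). lra.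
Qed.

Lemma Cfst : continuous prodII I_top (@fst I I).
Proof.
  intros V HV p Vp. exists V, (fun _ => True). repeat split; auto. apply Itop_true.
Qed.
Lemma Csnd : continuous prodII I_top (@snd I I).
Proof.
  intros V HV p Vp. exists (fun _ => True), V. repeat split; auto. apply Itop_true.
Qed.

Lemma Cpair g1 g2 : continuous prodII I_top g1 -> continuous prodII I_top g2 ->
  continuous prodII prodII (fun p => (g1 p, g2 p)).
Proof.
  intros H1 H2 W HW. apply prodII_intro. intros p Wp.
  destruct (HW _ Wp) as [U [V [HU [HV [Up [Vp K]]]]]]. simpl in Up, Vp.
  eapply nb2_mono. apply nb2_inter.
  apply (prodII_nb _ p (H1 U HU) Up). apply (prodII_nb _ p (H2 V HV) Vp).
  intros q [? ?]. apply K; auto.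
Qed.

Lemma Paste1 (X : Type) (op : topology X) (g1 g2 : I -> X) c :
  continuous I_top op g1 -> continuous I_top op g2 ->
  (forall s, ival s = c -> g1 s = g2 s) ->
  continuous I_top op (fun s => if Rle_dec (ival s) c then g1 s else g2 s).
Proof.
  intros H1 H2 E V HV t Vt.
  destruct (Rle_dec (ival t) c) as [Hle|Hgt].
  - destruct (Rle_lt_or_eq_dec _ _ Hle) as [Hlt|Heq].
    + destruct (H1 V HV t Vt) as [d [Hd K]]. exists (Rmin d (c - ival t)). split. rcase.
      intros s Hs. destruct (Rle_dec (ival s) c). apply K; rcase. exfalso. revert Hs; unfold Rabs; destruct Rcase_abs; rcase.
    + assert (V (g2 t)) by (rewrite <- E; auto).
      destruct (H1 V HV t Vt) as [d [Hd K]]. destruct (H2 V HV t H) as [d2 [Hd2 K2]].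
      exists (Rmin d d2). split. rcase. intros s Hs. destruct Rle_dec; [apply K|apply K2]; rcase.
  - destruct (H2 V HV t Vt) as [d [Hd K]]. exists (Rmin d (ival t - c)). split. rcase.
    intros s Hs. destruct (Rle_dec (ival s) c). exfalso. revert Hs; unfold Rabs; destruct Rcase_abs; rcase. apply K; rcase.
Qed.

Lemma Paste2 (X : Type) (op : topology X) (g1 g2 : I * I -> X) (r : I * I -> R) c :
  lip2 r -> continuous prodII op g1 -> continuous prodII op g2 ->
  (forall p, r p = c -> g1 p = g2 p) ->
  continuous prodII op (fun p => if Rle_dec (r p) c then g1 p else g2 p).
Proof.
  intros Hr H1 H2 E V HV. apply prodII_intro. intros p Vp.
  destruct (Rle_dec (r p) c) as [Hle|Hgt].
  - destruct (Rle_lt_or_eq_dec _ _ Hle) as [Hlt|Heq].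
    + eapply nb2_mono. apply nb2_inter. apply (prodII_nb _ p (H1 V HV) Vp). apply (nb2_lt r p c Hr Hlt).
      intros q [A B]. destruct Rle_dec; auto; lra.
    + assert (V (g2 p)) by (rewrite <- E; auto).
      eapply nb2_mono. apply nb2_inter. apply (prodII_nb _ p (H1 V HV) Vp). apply (prodII_nb _ p (H2 V HV) H).
      intros q [A B]. destruct Rle_dec; auto.
  - eapply nb2_mono. apply nb2_inter. apply (prodII_nb _ p (H2 V HV) Vp). apply (nb2_gt r p c Hr). lra.
    intros q [A B]. destruct Rle_dec; auto; lra.
Qed.


Lemma loop_of_val X op (x0 : X) f : is_loop op x0 f -> proj1_sig (loop_of op x0 f) = f.
Proof. intros H. unfold loop_of. destruct excluded_middle_informative; [reflexivity|contradiction]. Qed.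

Lemma lip1_lin a b : lip1 (fun s => a * ival s + b).
Proof. unfold lip1. apply lip2_plus. apply lip2_scal, lip2_fst. apply lip2_const. Qed.

Lemma lip2_ext e1 e2 : (forall p, e1 p = e2 p) -> lip2 e1 -> lip2 e2.
Proof. intros E [L [H K]]; exists L; split; auto; intros p q; rewrite <- !E; auto. Qed.
Lemma lip1_ext f g : (forall s, f s = g s) -> lip1 f -> lip1 g.
Proof. intros E; apply lip2_ext; intros; apply E. Qed.

Lemma Cloop X op (a : I -> X) f : continuous I_top op a -> lip1 f ->
  continuous I_top op (fun s => a (clampI (f s))).
Proof. intros Ha Hf. exact (Ccomp _ _ _ _ _ _ _ _ (C1 f Hf) Ha). Qed.

Lemma concat_loop X op (x0 : X) a b : is_loop op x0 a -> is_loop op x0 b -> is_loop op x0 (concat a b).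
Proof.
  intros [Ca [a0 a1]] [Cb [b0 b1]]. split; [|split].
  - unfold concat. apply Paste1.
    + apply Cloop; auto. eapply lip1_ext; [|apply (lip1_lin 2 0)]; intros; simpl; ring.
    + apply Cloop; auto. eapply lip1_ext; [|apply (lip1_lin 2 (-1))]; intros; simpl; ring.
    + intros s Hs. rewrite Hs, clamp_i1, clamp_i0 by lra. congruence.
  - unfold concat; simpl. destruct Rle_dec; [|lra]. rewrite clamp_i0 by lra. auto.
  - unfold concat; simpl. destruct Rle_dec; [lra|]. rewrite clamp_i1 by lra. auto.
Qed.

Lemma rev_loop X op (x0 : X) a : is_loop op x0 a -> is_loop op x0 (rev_path a).
Proof.
  intros [Ca [a0 a1]]. split; [|split].
  - unfold rev_path. apply Cloop; auto. eapply lip1_ext; [|apply (lip1_lin (-1) 1)]; intros; simpl; ring.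
  - unfold rev_path; simpl. rewrite clamp_i1 by lra. auto.
  - unfold rev_path; simpl. rewrite clamp_i0 by lra. auto.
Qed.

Definition lmul X op (x0 : X) (a b : Omega op x0) : Omega op x0 :=
  loop_of op x0 (concat (proj1_sig a) (proj1_sig b)).
Definition lrev X op (x0 : X) (a : Omega op x0) : Omega op x0 :=
  loop_of op x0 (rev_path (proj1_sig a)).
Arguments lmul {X op x0} a b.
Arguments lrev {X op x0} a.

Lemma lmul_val X op (x0 : X) (a b : Omega op x0) :
  proj1_sig (lmul a b) = concat (proj1_sig a) (proj1_sig b).
Proof. apply loop_of_val, concat_loop; apply proj2_sig. Qed.
Lemma lrev_val X op (x0 : X) (a : Omega op x0) :
  proj1_sig (lrev a) = rev_path (proj1_sig a).
Proof. apply loop_of_val, rev_loop; apply proj2_sig. Qed.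


Lemma lip2_minus e1 e2 : lip2 e1 -> lip2 e2 -> lip2 (fun p => e1 p - e2 p).
Proof.
  intros H1 H2. eapply lip2_ext; [|apply lip2_plus; [apply H1|apply (lip2_scal (-1) _ H2)]].
  intros; simpl; ring.
Qed.

Lemma lip2_opp e : lip2 e -> lip2 (fun p => - e p).
Proof. intros H. eapply lip2_ext; [|apply (lip2_scal (-1) _ H)]. intros; simpl; ring. Qed.

Ltac lipt := repeat (first [apply lip2_minus | apply lip2_plus | apply lip2_opp | apply lip2_scal | apply lip2_min
   | apply lip2_max | apply lip2_fst | apply lip2_snd | apply lip2_const]).

Lemma Crep_snd X op (H : I * I -> X) e : continuous prodII op H -> lip2 e ->
  continuous prodII op (fun p => H (fst p, clampI (e p))).
Proof.
  intros HH He. exact (Ccomp _ _ _ _ _ _ _ _ (Cpair _ _ Cfst (C2 e He)) HH).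
Qed.
Lemma Crep_fst X op (H : I * I -> X) e : continuous prodII op H -> lip2 e ->
  continuous prodII op (fun p => H (clampI (e p), snd p)).
Proof.
  intros HH He. exact (Ccomp _ _ _ _ _ _ _ _ (Cpair _ _ (C2 e He) Csnd) HH).
Qed.
Lemma Crep_loop X op (a : I -> X) e : continuous I_top op a -> lip2 e ->
  continuous prodII op (fun p => a (clampI (e p))).
Proof.
  intros Ha He. exact (Ccomp _ _ _ _ _ _ _ _ (C2 e He) Ha).
Qed.

Lemma loop_cont X op (x0 : X) (a : Omega op x0) : continuous I_top op (proj1_sig a).
Proof. exact (proj1 (proj2_sig a)). Qed.
Lemma loop_0 X op (x0 : X) (a : Omega op x0) : proj1_sig a i0 = x0.
Proof. exact (proj1 (proj2 (proj2_sig a))). Qed.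
Lemma loop_1 X op (x0 : X) (a : Omega op x0) : proj1_sig a i1 = x0.
Proof. exact (proj2 (proj2 (proj2_sig a))). Qed.

Arguments loop_cont {X op x0} a.
Arguments loop_0 {X op x0} a.
Arguments loop_1 {X op x0} a.

Lemma hom_refl X op (x0 : X) (a : Omega op x0) : homotopic a a.
Proof.
  exists (fun p => proj1_sig a (fst p)). split; [|split; [|split]].
  - exact (Ccomp _ _ _ _ _ _ _ _ Cfst (loop_cont a)).
  - reflexivity.
  - reflexivity.
  - intros t; split; [apply loop_0|apply loop_1].
Qed.

Lemma hom_sym X op (x0 : X) (a b : Omega op x0) : homotopic a b -> homotopic b a.
Proof.
  intros [H [HC [H0 [H1 He]]]].
  exists (fun p => H (fst p, clampI (1 - ival (snd p)))). split; [|split; [|split]].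
  - apply Crep_snd; auto. lipt.
  - intros s; simpl. rewrite clamp_i1 by lra. auto.
  - intros s; simpl. rewrite clamp_i0 by lra. auto.
  - intros t; simpl. apply He.
Qed.

Lemma hom_trans X op (x0 : X) (a b c : Omega op x0) : homotopic a b -> homotopic b c -> homotopic a c.
Proof.
  intros [H [HC [H0 [H1 He]]]] [G [GC [G0 [G1 Ge]]]].
  exists (fun p => if Rle_dec (ival (snd p)) (1/2) then H (fst p, clampI (2 * ival (snd p)))
           else G (fst p, clampI (2 * ival (snd p) - 1))). split; [|split; [|split]].
  - apply Paste2. lipt.
    + apply Crep_snd; auto; lipt.
    + apply Crep_snd; auto; lipt.
    + intros p Hp. rewrite Hp, clamp_i1, clamp_i0 by lra. rewrite H1, G0. auto.
  - intros s; simpl. destruct Rle_dec; [|lra]. rewrite clamp_i0 by lra. auto.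
  - intros s; simpl. destruct Rle_dec; [lra|]. rewrite clamp_i1 by lra. auto.
  - intros t; simpl. destruct Rle_dec; [apply He|apply Ge].
Qed.
Arguments hom_refl {X op x0} a.
Arguments hom_sym {X op x0 a b} _.
Arguments hom_trans {X op x0 a b c} _ _.



Lemma loop_at0 X op (x0 : X) (a : Omega op x0) u : u <= 0 -> proj1_sig a (clampI u) = x0.
Proof. intros; rewrite clamp_i0 by lra; apply loop_0. Qed.
Lemma loop_at1 X op (x0 : X) (a : Omega op x0) u : 1 <= u -> proj1_sig a (clampI u) = x0.
Proof. intros; rewrite clamp_i1 by lra; apply loop_1. Qed.
Lemma loop_ext X op (x0 : X) (a : Omega op x0) u v :
  ival (clampI u) = ival (clampI v) -> proj1_sig a (clampI u) = proj1_sig a (clampI v).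
Proof. intros; f_equal; apply I_eq; auto. Qed.
Lemma loop_ext_r X op (x0 : X) (a : Omega op x0) u (s : I) :
  ival (clampI u) = ival s -> proj1_sig a (clampI u) = proj1_sig a s.
Proof. intros; f_equal; apply I_eq; auto. Qed.
Lemma loop_ext_l X op (x0 : X) (a : Omega op x0) u (s : I) :
  ival s = ival (clampI u) -> proj1_sig a s = proj1_sig a (clampI u).
Proof. intros; f_equal; apply I_eq; auto. Qed.

Ltac rc := simpl in *; unfold Rmax, Rmin in *; repeat (destruct Rle_dec); lra.
Ltac side := first [ apply loop_at0; rc | apply loop_at1; rc ].
Ltac pt := repeat (match goal with |- context [Rle_dec ?x ?y] => destruct (Rle_dec x y) end);
  simpl;
  first [ reflexivity
        | apply loop_ext; rc
        | apply loop_ext_r; rc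
        | apply loop_ext_l; rc
        | side
        | symmetry; side
        | etransitivity; [side | symmetry; side] ].

Lemma hom_reparam X op (x0 : X) (a g : Omega op x0) (f : I -> R) :
  lip1 f -> f i0 = 0 -> f i1 = 1 -> (forall s, 0 <= f s <= 1) ->
  (forall s, proj1_sig g s = proj1_sig a (clampI (f s))) -> homotopic a g.
Proof.
  intros Hf F0 F1 Fb Eg.
  exists (fun p => proj1_sig a (clampI (Rmax (Rmin (f (fst p)) (ival (fst p) + ival (snd p)))
                                         (ival (fst p) - ival (snd p))))).
  split; [|split; [|split]].
  - apply Crep_loop. apply loop_cont. lipt; exact Hf.
  - intros s; simpl. pose proof (ival_bnd s). pose proof (Fb s). apply loop_ext_r. rc.
  - intros s; simpl. rewrite Eg. pose proof (ival_bnd s). pose proof (Fb s). apply loop_ext. rc.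
  - intros t; simpl. pose proof (ival_bnd t). rewrite F0, F1. split; side.
Qed.

Arguments hom_reparam {X op x0 a g} f _ _ _ _ _.

Lemma lip1_fun (e : I -> R) : lip2 (fun p => e (fst p)) -> lip1 e.
Proof. auto. Qed.

Lemma lmul_const_r X op (x0 : X) (a : Omega op x0) : homotopic (lmul a (const_loop op x0)) a.
Proof.
  apply hom_sym. apply (hom_reparam ((fun s => Rmin 1 (2 * ival s)))).
  - apply lip1_fun. lipt.
  - simpl; rcase.
  - simpl; rcase.
  - intros s; pose proof (ival_bnd s); rcase.
  - intros s. pose proof (ival_bnd s). rewrite lmul_val. unfold concat. pt.
Qed.

Lemma lmul_const_l X op (x0 : X) (a : Omega op x0) : homotopic (lmul (const_loop op x0) a) a.
Proof.
  apply hom_sym. apply (hom_reparam ((fun s => Rmax 0 (2 * ival s - 1)))).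
  - apply lip1_fun. lipt.
  - simpl; rcase.
  - simpl; rcase.
  - intros s; pose proof (ival_bnd s); rcase.
  - intros s. pose proof (ival_bnd s). rewrite lmul_val. unfold concat. pt.
Qed.




Lemma lmul_assoc X op (x0 : X) (a b c : Omega op x0) :
  homotopic (lmul a (lmul b c)) (lmul (lmul a b) c).
Proof.
  apply (hom_reparam (fun s => Rmin (Rmin (2 * ival s) (ival s + 1/4)) (1/2 * ival s + 1/2))).
  - apply lip1_fun. lipt.
  - simpl; rcase.
  - simpl; rcase.
  - intros s; pose proof (ival_bnd s); rcase.
  - intros s. pose proof (ival_bnd s) as Hs. rewrite !lmul_val. unfold concat. rewrite ?lmul_val. unfold concat.
    destruct (Rle_dec (ival s) (1/4)).
    + replace (Rmin (Rmin (2 * ival s) (ival s + 1/4)) (1/2 * ival s + 1/2)) with (2 * ival s) by rc.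
      rewrite !(clamp_val (2 * ival s)) by lra.
      destruct (Rle_dec (ival s) (1/2)); [|lra]. destruct (Rle_dec (2 * ival s) (1/2)); [|lra].
      first [reflexivity | apply loop_ext; f_equal; f_equal; lra].
    + destruct (Rle_dec (ival s) (1/2)).
      * replace (Rmin (Rmin (2 * ival s) (ival s + 1/4)) (1/2 * ival s + 1/2)) with (ival s + 1/4) by rc.
        rewrite !(clamp_val (2 * ival s)) by lra. rewrite (clamp_val (ival s + 1/4)) by lra.
        destruct (Rle_dec (2 * ival s) (1/2)); [lra|]. destruct (Rle_dec (ival s + 1/4) (1/2)); [lra|].
        rewrite (clamp_val (2 * (ival s + 1/4) - 1)) by lra.
        destruct (Rle_dec (2 * (ival s + 1 / 4) - 1) (1/2)); [|lra].
        first [reflexivity | apply loop_ext; f_equal; f_equal; lra].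
      * replace (Rmin (Rmin (2 * ival s) (ival s + 1/4)) (1/2 * ival s + 1/2)) with (1/2 * ival s + 1/2) by rc.
        rewrite (clamp_val (1/2 * ival s + 1/2)) by lra.
        destruct (Rle_dec (1/2 * ival s + 1/2) (1/2)); [lra|].
        rewrite (clamp_val (2 * (1/2 * ival s + 1/2) - 1)) by lra.
        destruct (Rle_dec (2 * (1/2 * ival s + 1/2) - 1) (1/2)); [lra|].
        first [reflexivity | apply loop_ext; f_equal; f_equal; lra].
Qed.



Lemma lmul_inv_r X op (x0 : X) (a : Omega op x0) : homotopic (lmul a (lrev a)) (const_loop op x0).
Proof.
  exists (fun p => proj1_sig a (clampI (Rmin (Rmin (2 * ival (fst p)) (2 - 2 * ival (fst p))) (1 - ival (snd p))))).
  split; [|split; [|split]].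
  - apply Crep_loop. apply loop_cont. lipt.
  - intros s. pose proof (ival_bnd s). rewrite lmul_val. unfold concat. rewrite lrev_val. unfold rev_path. simpl fst; simpl snd.
    destruct Rle_dec.
    + apply loop_ext. rc.
    + rewrite (clamp_val (2 * ival s - 1)) by lra. apply loop_ext. rc.
  - intros s. pose proof (ival_bnd s). simpl. apply loop_at0. rc.
  - intros t. pose proof (ival_bnd t). simpl. split; apply loop_at0; rc.
Qed.

Lemma lmul_inv_l X op (x0 : X) (a : Omega op x0) : homotopic (lmul (lrev a) a) (const_loop op x0).
Proof.
  exists (fun p => proj1_sig a (clampI (Rmax (Rmax (1 - 2 * ival (fst p)) (2 * ival (fst p) - 1)) (ival (snd p))))).
  split; [|split; [|split]].
  - apply Crep_loop. apply loop_cont. lipt.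
  - intros s. pose proof (ival_bnd s). rewrite lmul_val. unfold concat. rewrite lrev_val. unfold rev_path. simpl fst; simpl snd.
    destruct Rle_dec.
    + rewrite (clamp_val (2 * ival s)) by lra. apply loop_ext. rc.
    + apply loop_ext. rc.
  - intros s. pose proof (ival_bnd s). simpl. apply loop_at1. rc.
  - intros t. pose proof (ival_bnd t). simpl. split; apply loop_at1; rc.
Qed.

Lemma lmul_compat X op (x0 : X) (a a' b b' : Omega op x0) :
  homotopic a a' -> homotopic b b' -> homotopic (lmul a b) (lmul a' b').
Proof.
  intros [H [HC [H0 [H1 He]]]] [G [GC [G0 [G1 Ge]]]].
  exists (fun p => if Rle_dec (ival (fst p)) (1/2) then H (clampI (2 * ival (fst p)), snd p)
           else G (clampI (2 * ival (fst p) - 1), snd p)). split; [|split; [|split]].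
  - apply Paste2. lipt.
    + apply Crep_fst; auto; lipt.
    + apply Crep_fst; auto; lipt.
    + intros p Hp. rewrite Hp, clamp_i1, clamp_i0 by lra. rewrite (proj2 (He _)), (proj1 (Ge _)). auto.
  - intros s; rewrite lmul_val; unfold concat; simpl. destruct Rle_dec; auto.
  - intros s; rewrite lmul_val; unfold concat; simpl. destruct Rle_dec; auto.
  - intros t; simpl. destruct Rle_dec; [|lra]. destruct Rle_dec; [lra|].
    rewrite clamp_i0, clamp_i1 by lra. split; [apply He|apply Ge].
Qed.


Lemma repr_spec (A : Type) (R : A -> A -> Prop) (c : quot R) : proj1_sig c = R (repr c).
Proof.
  unfold repr. destruct (constructive_indefinite_description _ _) as [a Ha]. simpl. exact Ha.
Qed.
Lemma cls_repr (A : Type) (R : A -> A -> Prop) (c : quot R) : cls R (repr c) = c.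
Proof. apply sig_eq_pi. simpl. symmetry. apply repr_spec. Qed.

Lemma hom_eqv X op (x0 : X) (a b : Omega op x0) : homotopic a b -> homotopic a = homotopic b.
Proof.
  intros H. apply functional_extensionality; intros c. apply propositional_extensionality.
  split; intros K. exact (hom_trans (hom_sym H) K). exact (hom_trans H K).
Qed.

Lemma pi1_cls_eq X op (x0 : X) (a b : Omega op x0) : pi1_cls a = pi1_cls b <-> homotopic a b.
Proof.
  split.
  - intros E. apply (f_equal (@proj1_sig _ _)) in E. simpl in E. rewrite E. apply hom_refl.
  - intros H. apply sig_eq_pi. simpl. apply hom_eqv; auto.
Qed.

Lemma repr_hom X op (x0 : X) (a : Omega op x0) : homotopic (repr (pi1_cls a)) a.
Proof. apply pi1_cls_eq. apply cls_repr. Qed.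

Lemma pi1_mul_eq X op (x0 : X) (c d : pi1 op x0) : pi1_mul c d = pi1_cls (lmul (repr c) (repr d)).
Proof. reflexivity. Qed.
Lemma pi1_inv_eq X op (x0 : X) (c : pi1 op x0) : pi1_inv c = pi1_cls (lrev (repr c)).
Proof. reflexivity. Qed.

Lemma pi1_mul_one X op (x0 : X) (c : pi1 op x0) : pi1_mul c (pi1_one op x0) = c.
Proof.
  rewrite pi1_mul_eq. transitivity (pi1_cls (repr c)); [|apply cls_repr].
  apply pi1_cls_eq. eapply hom_trans; [|apply lmul_const_r].
  apply lmul_compat. apply hom_refl. apply repr_hom.
Qed.

Lemma pi1_cancel1 X op (x0 : X) (c d : pi1 op x0) : pi1_mul c (pi1_mul (pi1_inv c) d) = d.
Proof.
  rewrite !pi1_mul_eq, pi1_inv_eq. transitivity (pi1_cls (repr d)); [|apply cls_repr].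
  apply pi1_cls_eq.
  eapply hom_trans. apply lmul_compat. apply hom_refl.
  eapply hom_trans. apply repr_hom. apply lmul_compat. apply repr_hom. apply hom_refl.
  eapply hom_trans. apply lmul_assoc.
  eapply hom_trans. apply lmul_compat. apply lmul_inv_r. apply hom_refl.
  apply lmul_const_l.
Qed.

Lemma pi1_cancel2 X op (x0 : X) (c d : pi1 op x0) : pi1_mul (pi1_inv c) (pi1_mul c d) = d.
Proof.
  rewrite !pi1_mul_eq, pi1_inv_eq. transitivity (pi1_cls (repr d)); [|apply cls_repr].
  apply pi1_cls_eq.
  eapply hom_trans. apply lmul_compat. apply repr_hom. apply repr_hom.
  eapply hom_trans. apply lmul_assoc.
  eapply hom_trans. apply lmul_compat. apply lmul_inv_l. apply hom_refl.
  apply lmul_const_l.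
Qed.

Lemma eval_red1 X op (x0 : X) (w w' : word (pi1 op x0)) : red1 w w' ->
  eval_word (@pi1_mul X op x0) (@pi1_inv X op x0) (pi1_one op x0) w =
  eval_word (@pi1_mul X op x0) (@pi1_inv X op x0) (pi1_one op x0) w'.
Proof.
  intros [w1 w2 b x]. induction w1 as [|[[|] y] w1 IH]; simpl.
  - destruct b; simpl. apply pi1_cancel1. apply pi1_cancel2.
  - rewrite IH; auto.
  - rewrite IH; auto.
Qed.

Lemma eval_wequiv X op (x0 : X) (w w' : word (pi1 op x0)) : wequiv w w' ->
  eval_word (@pi1_mul X op x0) (@pi1_inv X op x0) (pi1_one op x0) w =
  eval_word (@pi1_mul X op x0) (@pi1_inv X op x0) (pi1_one op x0) w'.
Proof.
  induction 1. apply eval_red1; auto. reflexivity. congruence. congruence.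
Qed.

Lemma mG_gen X op (x0 : X) (c : pi1 op x0) :
  mG (@pi1_mul X op x0) (@pi1_inv X op x0) (pi1_one op x0) (FG_gen c) = c.
Proof.
  unfold mG, FG_gen. pose proof (repr_spec _ _ (cls (@wequiv _) ((true, c) :: nil))) as E. simpl in E.
  assert (W : wequiv ((true, c) :: nil) (repr (cls (@wequiv _) ((true, c) :: nil)))).
  { rewrite E. apply rst_refl. }
  apply eval_wequiv in W. rewrite <- W. simpl. apply pi1_mul_one.
Qed.


Lemma gen_true (T : Type) (S : (T -> Prop) -> Prop) : generated_top S (fun _ => True).
Proof. intros x _. exists nil. simpl. repeat split; intros; tauto. Qed.

Lemma gen_inter (T : Type) (S : (T -> Prop) -> Prop) A B :
  generated_top S A -> generated_top S B -> generated_top S (fun x => A x /\ B x).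
Proof.
  intros HA HB x [Ax Bx]. destruct (HA x Ax) as [l1 [P1 [Q1 R1]]]. destruct (HB x Bx) as [l2 [P2 [Q2 R2]]].
  exists (l1 ++ l2). split; [|split].
  - intros U HU; apply in_app_or in HU; destruct HU as [HU|HU]; [apply P1|apply P2]; exact HU.
  - intros U HU; apply in_app_or in HU; destruct HU as [HU|HU]; [apply Q1|apply Q2]; exact HU.
  - intros y Hy. split; [apply R1|apply R2]; intros U HU; apply Hy; apply in_or_app; auto.
Qed.

Lemma gen_local (T : Type) (S : (T -> Prop) -> Prop) A :
  (forall x, A x -> exists O, generated_top S O /\ O x /\ forall y, O y -> A y) -> generated_top S A.
Proof.
  intros H x Ax. destruct (H x Ax) as [O [HO [Ox OA]]]. destruct (HO x Ox) as [l [P [Q R]]].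
  exists l. repeat split; auto.
Qed.

Lemma gen_preimage (A B : Type) (SA : (A -> Prop) -> Prop) (SB : (B -> Prop) -> Prop) (phi : A -> B) :
  (forall s x, SB s -> s (phi x) -> exists s', SA s' /\ s' x /\ forall y, s' y -> s (phi y)) ->
  forall W, generated_top SB W -> generated_top SA (fun x => W (phi x)).
Proof.
  intros H W HW x Wx. destruct (HW _ Wx) as [l [P [Q R]]].
  assert (exists l', (forall s, In s l' -> SA s) /\ (forall s, In s l' -> s x) /\
            (forall y, (forall s, In s l' -> s y) -> forall s, In s l -> s (phi y))) as [l' [P' [Q' R']]].
  { clear R. induction l as [|s l IH].
    - exists nil. simpl. repeat split; tauto.
    - destruct IH as [l' [P' [Q' R']]]. intros; apply P; simpl; auto. intros; apply Q; simpl; auto.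
      destruct (H s x) as [s' [Ss' [s'x K]]]. apply P; simpl; auto. apply Q; simpl; auto.
      exists (s' :: l'). split; [|split].
      + intros s0 [<-|Hs0]; [exact Ss'|apply P'; exact Hs0].
      + intros s0 [<-|Hs0]; [exact s'x|apply Q'; exact Hs0].
      + intros y Hy s0 [<-|Hs0]. apply K, Hy; simpl; auto. apply R'; auto. intros; apply Hy; simpl; auto. }
  exists l'. repeat split; auto. intros y Hy. apply R. apply R'. auto.
Qed.

Lemma gen_cont_qtop X op (x0 : X) :
  continuous (pi1_qtop op x0) (markov_top (pi1_qtop op x0)) (@FG_gen _).
Proof.
  intros W HW. unfold pi1_qtop, quotient_top. apply gen_local. intros a Wa.
  destruct (HW _ Wa) as [l [P [Q R]]].
  exists (fun a' => forall U, In U l -> U (FG_gen (pi1_cls a'))). split; [|split].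
  - clear Q R. induction l as [|U l IH].
    + apply gen_local. intros; exists (fun _ => True); split; [apply gen_true|].
      split; [exact Logic.I|intros y _ U []].
    + assert (H1 : Omega_top op x0 (fun a' => U (FG_gen (pi1_cls a')))).
      { destruct (P U) as [T [_ [HT TU]]]; [simpl; auto|]. exact (HT U TU). }
      assert (H2 := gen_inter _ _ _ _ H1 (IH (fun V HV => P V (or_intror HV)))).
      apply gen_local. intros y Hy. exists (fun a' => U (FG_gen (pi1_cls a')) /\
               (forall U0, In U0 l -> U0 (FG_gen (pi1_cls a')))). split; [exact H2|]. split.
      * split; [apply Hy; simpl; auto|intros; apply Hy; simpl; auto].
      * intros z [Hz1 Hz2] U0 [<-|HU0]; [exact Hz1|apply Hz2; exact HU0].
  - intros; apply Q; auto.
  - intros y Hy. apply R; auto.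
Qed.

Lemma part1 X op (x0 : X) : discrete (pi1_tau_top op x0) <-> discrete (pi1_qtop op x0).
Proof.
  split.
  - intros Hd V. pose proof (gen_cont_qtop X op x0 _ (Hd V)) as H.
    replace V with (fun c => V (mG (@pi1_mul X op x0) (@pi1_inv X op x0) (pi1_one op x0) (FG_gen c))).
    exact H. apply functional_extensionality; intros c; rewrite mG_gen; auto.
  - intros Hd V. unfold pi1_tau_top, tau_top, quotient_top, markov_top.
    intros w Hw. exists ((fun w => V (mG (@pi1_mul X op x0) (@pi1_inv X op x0) (pi1_one op x0) w)) :: nil).
    split; [|split].
    + intros U [<-|[]]. exists (fun _ => True). split; [|split].
      * split; [repeat split; intros; exact Logic.I|split].
        -- intros V0 _ p Hp. exists (fun a => a = fst p), (fun b => b = snd p).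
           repeat split; try exact Logic.I. intros a b -> ->. destruct p; exact Hp.
        -- intros V0 _; exact Logic.I.
      * intros V' _. apply Hd.
      * exact Logic.I.
    + intros U [<-|[]]. auto.
    + intros y Hy. apply (Hy _ (or_introl eq_refl)).
Qed.


Lemma compact_half (K : I -> Prop) : compact I_top K ->
  compact I_top (fun u => exists t, K t /\ ival t <= 1/2 /\ u = clampI (2 * ival t)).
Proof.
  intros HK C HC Hcov.
  set (ext := fun t : I => 1/2 < ival t).
  set (C' := fun V => V = ext \/ exists U, C U /\ V = (fun t => U (clampI (2 * ival t)) \/ 1/2 < ival t)).
  destruct (HK C') as [l' [Hl'1 Hl'2]].
  - intros V [->|[U [HU ->]]].
    + intros t Ht. exists (ival t - 1/2). split. unfold ext in Ht; lra.
      intros s Hs. unfold ext in *. revert Hs; unfold Rabs; destruct Rcase_abs; lra.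
    + intros t [Ht|Ht].
      * assert (Ho : I_top (fun s => U (clampI (2 * ival s)))).
        { apply (C1 (fun s => 2 * ival s)). apply lip1_fun. lipt. apply HC; auto. }
        eapply nb1_mono. apply (Ho t Ht). intros s Hs; left; exact Hs.
      * exists (ival t - 1/2). split. lra.
        intros s Hs. right. revert Hs; unfold Rabs; destruct Rcase_abs; lra.
  - intros t Kt. destruct (Rle_dec (ival t) (1/2)).
    + destruct (Hcov (clampI (2 * ival t))) as [U [CU Ut]]. exists t; auto.
      exists (fun t => U (clampI (2 * ival t)) \/ 1/2 < ival t). split. right; exists U; auto. left; auto.
    + exists ext. split. left; auto. unfold ext; lra.
  - assert (exists l, (forall U, In U l -> C U) /\ forall V, In V l' -> V = ext \/
              exists U, In U l /\ V = (fun t => U (clampI (2 * ival t)) \/ 1/2 < ival t)) as [l [Hl1 Hl2]].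
    { clear Hl'2. induction l' as [|V l' IH].
      - exists nil. split; intros ? [].
      - destruct IH as [l [Hl1 Hl2]]. intros; apply Hl'1; simpl; auto.
        destruct (Hl'1 V (or_introl eq_refl)) as [->|[U [HU ->]]].
        + exists l. split; auto. intros V0 [<-|HV0]; [left; auto|apply Hl2; auto].
        + exists (U :: l). split. intros U0 [<-|HU0]; auto.
          intros V0 [<-|HV0]. right; exists U; split; simpl; auto.
          destruct (Hl2 V0 HV0) as [E|[U1 [HU1 E]]]; [left; auto|right; exists U1; split; simpl; auto]. }
    exists l. split; auto. intros u [t [Kt [Ht ->]]].
    destruct (Hl'2 t Kt) as [V [HV Vt]]. destruct (Hl2 V HV) as [->|[U [HU ->]]].
    + unfold ext in Vt; lra.
    + destruct Vt as [Vt|Vt]; [|lra]. exists U; auto.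
Qed.

Lemma CO_step X op (x0 : X) (a' b : Omega op x0) S :
  CO_subbasis S -> S (lmul b a') ->
  exists S', CO_subbasis S' /\ S' b /\ forall c, S' c -> S (lmul c a').
Proof.
  intros [K [U [HK [HU Hiff]]]] Hsb. pose proof (proj1 (Hiff (lmul b a')) Hsb) as Hsb0; clear Hsb; rename Hsb0 into Hsb.
  exists (fun c : Omega op x0 => forall u, (exists t, K t /\ ival t <= 1/2 /\ u = clampI (2 * ival t)) -> U (proj1_sig c u)).
  split; [|split].
  - exists (fun u => exists t, K t /\ ival t <= 1/2 /\ u = clampI (2 * ival t)), U.
    split; [apply compact_half; auto|split; auto]. intros; tauto.
  - intros u [t [Kt [Ht ->]]]. specialize (Hsb t Kt). rewrite lmul_val in Hsb. unfold concat in Hsb.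
    destruct Rle_dec; [exact Hsb|lra].
  - intros c Hc. apply (proj2 (Hiff _)). intros t Kt. rewrite lmul_val. unfold concat. destruct Rle_dec.
    + apply Hc. exists t; auto.
    + specialize (Hsb t Kt). rewrite lmul_val in Hsb. unfold concat in Hsb. destruct Rle_dec; [lra|exact Hsb].
Qed.

Lemma psi_cont X op (x0 : X) (a' : Omega op x0) W :
  Omega_top op x0 W -> Omega_top op x0 (fun b => W (lmul b a')).
Proof.
  apply (gen_preimage _ _ _ _ (fun b => lmul b a')). intros s b Hs sb. apply CO_step; auto.
Qed.

Lemma part2 X op (x0 : X) : discrete (pi1_qtop op x0) <->
     (forall a : Omega op x0, null_homotopic a ->
        exists W : Omega op x0 -> Prop,
          Omega_top op x0 W /\ W a /\ (forall b, W b -> null_homotopic b)).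
Proof.
  split.
  - intros Hd a Ha. exists (fun b => pi1_cls b = pi1_cls a). split; [|split].
    + apply (Hd (fun c => c = pi1_cls a)).
    + reflexivity.
    + intros b Hb. apply pi1_cls_eq in Hb. exact (hom_trans Hb Ha).
  - intros Hn V. unfold pi1_qtop, quotient_top. apply gen_local. intros a Va.
    destruct (Hn (lmul a (lrev a)) (lmul_inv_r _ _ _ a)) as [W [HW [Wa Wn]]].
    exists (fun b => W (lmul b (lrev a))). split; [apply psi_cont; auto|split; auto].
    intros b Wb. specialize (Wn _ Wb).
    assert (Hba : homotopic b a).
    { eapply hom_trans. apply hom_sym, lmul_const_r.
      eapply hom_trans. apply lmul_compat. apply hom_refl. apply hom_sym, lmul_inv_l.
      eapply hom_trans. apply lmul_assoc.
      eapply hom_trans. apply lmul_compat. exact Wn. apply hom_refl.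
      apply lmul_const_l. }
    apply pi1_cls_eq in Hba. rewrite Hba. exact Va.
Qed.

Theorem proposition3p16 (X : Type) (op : topology X) (x0 : X)
  (Htop : is_topology op) (Hpc : path_connected op) :
  (discrete (pi1_tau_top op x0) <-> discrete (pi1_qtop op x0)) /\
  (discrete (pi1_qtop op x0) <->
     (forall a : Omega op x0, null_homotopic a ->
        exists W : Omega op x0 -> Prop,
          Omega_top op x0 W /\ W a /\ (forall b, W b -> null_homotopic b))).
Proof. split; [apply part1|apply part2]. Qed.
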